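(* Let $(X,\|\cdot\|)$ be a uniformly convex Banach space and let $\{v_n\}_{n\in\mathbb{N}}$ be a sequence of vectors in $X$ such that $\|v_{n+m}\|\le \|v_n+v_m\|$ for all $n,m\in\mathbb{N}$. Then the limit $\lim_{n\to\infty}\frac{v_n}{n}$ exists in $X$.
   Context: $\mathbb{N}=\{1,2,3,\dots\}$. A Banach space $X$ is uniformly convex if for every $\varepsilon>0$ there exists $\delta>0$ such that for all $u,v\in X$ with $\|u\|=\|v\|=1$ and $\|u-v\|\ge\varepsilon$ we have $\|u+v\|\le 2-\delta$. *)

(* Defs.v *)
From HB Require Import structures.
From mathcomp Require Import all_boot all_order all_algebra.
From mathcomp Require Import all_classical all_reals all_analysis.
Set Implicit Arguments. Unset Strict Implicit. Unset Printing Implicit Defensive.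
Import Order.TTheory GRing.Theory Num.Theory.
Import numFieldNormedType.Exports.
Local Open Scope ring_scope.

Definition uniformly_convex (R : realType) (X : normedModType R) : Prop :=
  forall eps : R, 0 < eps -> exists2 delta : R, 0 < delta &
    forall u v : X, `|u| = 1 -> `|v| = 1 -> eps <= `|u - v| ->
      `|u + v| <= 2 - delta.

(* Main.v *)
Require Import Defs.
From HB Require Import structures.
From mathcomp Require Import all_boot all_order all_algebra.
From mathcomp Require Import all_classical all_reals all_analysis.
From mathcomp Require Import ring lra zify.
Import Order.TTheory GRing.Theory Num.Theory.
Import numFieldNormedType.Exports.
Local Open Scope ring_scope.
Local Open Scope classical_set_scope.
Set Implicit Arguments. Unset Strict Implicit. Unset Printing Implicit Defensive.

Lemma argmin_le (R : realType) (f : nat -> R) (K : nat) :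
  exists i, (i <= K)%N /\ forall j, (j <= K)%N -> f i <= f j.
Proof.
elim: K => [|K [i [iK Hi]]].
  by exists 0%N; split => // j; rewrite leqn0 => /eqP ->.
have [fle|flt] := leP (f i) (f K.+1).
  exists i; split; first by apply: leq_trans iK _.
  move=> j; rewrite leq_eqVlt => /orP[/eqP ->//|]; rewrite ltnS; exact: Hi.
exists K.+1; split => // j; rewrite leq_eqVlt => /orP[/eqP ->//|]; rewrite ltnS.
by move=> /Hi; apply: le_trans; apply: ltW.
Qed.
Lemma subadd_iter (R : realType) (a : nat -> R) (k r : nat) :
  (forall n m, (0 < n)%N -> (0 < m)%N -> a (n + m)%N <= a n + a m) ->
  (0 < k)%N -> (0 < r)%N ->
  forall q, a (q * k + r)%N <= q%:R * a k + a r.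
Proof.
move=> sa k0 r0; elim=> [|q IH]; first by rewrite mul0n add0n mul0r add0r.
rewrite mulSn -addnA (le_trans (sa _ _ k0 _)) ?addn_gt0 ?r0 ?orbT//.
rewrite mulrSr mulrDl mul1r; lra.
Qed.

Lemma fekete (R : realType) (a : nat -> R) :
  (forall n, 0 <= a n) ->
  (forall n m, (0 < n)%N -> (0 < m)%N -> a (n + m)%N <= a n + a m) ->
  exists L : R, 0 <= L /\ (forall n, (0 < n)%N -> L * n%:R <= a n) /\
    (forall eta, 0 < eta -> exists N, forall n, (N <= n)%N -> (0 < n)%N ->
       a n <= (L + eta) * n%:R).
Proof.
move=> a0 sa.
pose E := [set a n / n%:R | n in [set n : nat | (0 < n)%N]].
have E1 : E (a 1%N / 1%:R) by exists 1%N.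
have lbE : lbound E 0.
  by move=> _ [n /= n0 <-]; rewrite divr_ge0.
have nE : nonempty E by exists (a 1%N / 1%:R).
have hlE : has_lbound E by exists 0.
have hiE : has_inf E by split; [exists (a 1%N / 1%:R) | by []].
exists (inf E); split; first exact: (lb_le_inf nE lbE).
split.
  move=> n n0; have := ge_inf hlE (ex_intro2 _ _ n n0 erefl).
  by rewrite ler_pdivlMr ?ltr0n.
move=> eta eta0.
have eta20 : 0 < eta / 2 by rewrite divr_gt0.
have [_ [k k0 <-] ek] := inf_adherent eta20 hiE.
have k0' : (0 < k)%N by exact: k0.
have Lge0 : 0 <= inf E by exact: (lb_le_inf nE lbE).
have akle : a k <= k%:R * (inf E + eta / 2).
  by rewrite mulrC -ler_pdivrMr ?ltr0n// ltW.
pose C := \sum_(r < k.+1) a r.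
have aC : forall r, (r <= k)%N -> a r <= C.
  move=> r rk; rewrite /C (bigD1 (@Ordinal k.+1 r rk)) //= lerDl.
  by apply: sumr_ge0 => i _.
exists (Num.truncn (C / (eta / 2))).+1 => n Nn n0.
have Cn : C < n%:R * (eta / 2).
  rewrite -ltr_pdivrMr // (lt_le_trans (truncnS_gt _)) // ler_nat; exact: Nn.
pose q := ((n.-1) %/ k)%N; pose r := ((n.-1) %% k).+1.
have nqr : n = (q * k + r)%N.
  by rewrite /q /r addnS -divn_eq prednK.
have rk : (r <= k)%N by rewrite /r ltn_mod.
have qkn : (q * k <= n)%N by rewrite nqr leq_addr.
have h1 := @subadd_iter _ a k r sa k0' isT q.
rewrite -nqr in h1.
have h2 : q%:R * a k <= n%:R * (inf E + eta / 2).
  apply: (le_trans (ler_wpM2l (ler0n _ _) akle)).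
  rewrite mulrA -natrM ler_wpM2r ?ler_nat //.
  by rewrite addr_ge0 // ltW.
have h3 := aC r rk.
have h4 : (inf E + eta) * n%:R = n%:R * (inf E + eta / 2) + n%:R * (eta / 2).
  by field.
rewrite h4; lra.
Qed.
Lemma unit_norm (R : realType) (X : normedModType R) (x : X) :
  0 < `|x| -> `| `|x|^-1 *: x| = 1.
Proof.
move=> x0; rewrite normrZ ger0_norm ?invr_ge0 ?ltW // mulVf //.
by rewrite gt_eqF.
Qed.

Lemma uc_defect (R : realType) (X : normedModType R) :
  uniformly_convex X -> forall eps : R, 0 < eps -> exists2 delta : R, 0 < delta &
  forall x y : X, 0 < `|x| -> 0 < `|y| ->
    eps <= `| `|x|^-1 *: x - `|y|^-1 *: y| ->
    `|x + y| <= `|x| + `|y| - delta * Num.min `|x| `|y|.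
Proof.
move=> UC eps eps0; have [delta d0 Hd] := UC eps eps0.
exists delta => // x y.
wlog xy : x y / `|x| <= `|y|.
  move=> W x0 y0 e; case/orP: (le_total `|x| `|y|) => [xy|yx]; first exact: W xy x0 y0 e.
  have e' : eps <= `| `|y|^-1 *: y - `|x|^-1 *: x| by rewrite -normrN opprB.
  have := W y x yx y0 x0 e'.
  by rewrite addrC minC [`|y| + _]addrC.
move=> x0 y0 e.
have -> : Num.min `|x| `|y| = `|x| by rewrite /Num.min; case: ltgtP xy => //.
set xh := `|x|^-1 *: x; set yh := `|y|^-1 *: y.
have exy : x + y = `|x| *: (xh + yh) + (`|y| - `|x|) *: yh.
  rewrite scalerDr -addrA -scalerDl addrCA subrr addr0 /xh /yh !scalerA.
  by rewrite !mulfV ?gt_eqF // !scale1r.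
rewrite exy (le_trans (ler_normD _ _)) // !normrZ !ger0_norm ?subr_ge0 //.
rewrite mulVf ?gt_eqF // mulr1.
have := Hd xh yh (unit_norm x0) (unit_norm y0) e => h.
have : `|x| * `|xh + yh| <= `|x| * (2 - delta) by rewrite ler_wpM2l.
lra.
Qed.

Lemma min_exists (R : realType) (phi : nat -> R) (eta : R) (M : nat) :
  0 < eta -> (forall k, (M <= k)%N -> eta * k%:R <= phi k) ->
  exists2 m, (M <= m)%N & forall k, (M <= k)%N -> phi m <= phi k.
Proof.
move=> eta0 Hphi.
pose K := Num.truncn (phi M / eta).
have [i [iK Hi]] := argmin_le (fun j => phi (M + j)%N) K.
exists (M + i)%N; first exact: leq_addr.
move=> k Mk; have -> : k = (M + (k - M))%N by lia.
have [jK|Kj] := leqP (k - M) K; first exact: Hi.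
apply: (le_trans (Hi 0%N isT)); rewrite addn0.
apply: (le_trans _ (Hphi _ (leq_addr _ _))).
have h1 : phi M / eta < (k - M)%:R.
  by apply: (lt_le_trans (truncnS_gt _)); rewrite ler_nat.
have h2 : (k - M)%:R <= (M + (k - M))%:R :> R by rewrite ler_nat leq_addl.
rewrite ltr_pdivrMr // in h1.
have : (k - M)%:R * eta <= (M + (k - M))%:R * eta by rewrite ler_wpM2r // ltW.
rewrite mulrC; lra.
Qed.

Lemma dir_close (R : realType) (X : normedModType R) (v : nat -> X) (L : R) :
  uniformly_convex X ->
  (forall n m : nat, (0 < n)%N -> (0 < m)%N -> `|v (n + m)%N| <= `|v n + v m|) ->
  0 < L -> (forall n, (0 < n)%N -> L * n%:R <= `|v n|) ->
  (forall eta, 0 < eta -> exists N, forall n, (N <= n)%N -> (0 < n)%N ->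
       `|v n| <= (L + eta) * n%:R) ->
  forall eps, 0 < eps -> exists N, forall n n', (N <= n)%N -> (N <= n')%N ->
    `| `|v n|^-1 *: v n - `|v n'|^-1 *: v n'| < eps + eps.
Proof.
move=> UC sa L0 Hlo Hup eps eps0.
have [delta d0 Hd] := uc_defect UC eps0.
pose eta := delta * L / 4.
have eta0 : 0 < eta by rewrite /eta !mulr_gt0.
have [N1 HN1] := Hup eta eta0.
pose c := L - eta.
pose phi k := `|v k| - c * k%:R.
exists (maxn N1 1) => n n' Nn Nn'.
pose M := maxn n n'.
have M1 : (0 < M)%N by lia.
have [m Mm Hm] : exists2 m, (M <= m)%N & forall k, (M <= k)%N -> phi m <= phi k.
  apply: (@min_exists _ phi eta) => // k Mk.
  have := Hlo k (leq_trans M1 Mk); rewrite /phi /c; lra.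
have key : forall k, (maxn N1 1 <= k)%N -> (k <= M)%N ->
    `| `|v k|^-1 *: v k - `|v m|^-1 *: v m| < eps.
  move=> k Nk kM; rewrite ltNge; apply/negP => /[dup] e.
  have k0 : (0 < k)%N by lia.
  have m0 : (0 < m)%N by lia.
  have kL : 0 < L * k%:R by rewrite mulr_gt0 // ltr0n.
  have ak0 : 0 < `|v k| := lt_le_trans kL (Hlo k k0).
  have mL : L * k%:R <= L * m%:R by rewrite ler_pM2l // ler_nat; lia.
  have am0 : 0 < `|v m| := lt_le_trans (lt_le_trans kL mL) (Hlo m m0).
  move=> /(Hd _ _ ak0 am0) h1.
  have hmin : L * k%:R <= Num.min `|v k| `|v m|.
    by rewrite le_min Hlo //= (le_trans mL) // Hlo.
  have h2 : delta * (L * k%:R) <= delta * Num.min `|v k| `|v m|.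
    by rewrite ler_wpM2l // ltW.
  have h3 := sa k m k0 m0.
  have h4 := Hm (m + k)%N (leq_trans Mm (leq_addr _ _)).
  rewrite /phi addnC natrD in h4.
  have h5 := HN1 k (leq_trans (leq_maxl _ _) Nk) k0.
  have h6 : delta * (L * k%:R) = 4 * (eta * k%:R) by rewrite /eta; field.
  rewrite /c mulrDl !mulrBl mulrDr in h4 *.
  rewrite mulrDl in h5.
  have h7 : 0 < eta * k%:R by rewrite mulr_gt0 // ltr0n.
  lra.
have hk1 := key n Nn (leq_maxl _ _).
have hk2 := key n' Nn' (leq_maxr _ _).
rewrite -(subrKA (`|v m|^-1 *: v m)).
apply: (le_lt_trans (ler_normD _ _)).
by rewrite -normrN opprB in hk2; apply: ltrD.
Qed.

Lemma normu (R : realType) (X : normedModType R) (x : X) (n : nat) :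
  `|n%:R^-1 *: x| = `|x| / n%:R.
Proof. by rewrite normrZ ger0_norm ?invr_ge0 // mulrC. Qed.

Unset Implicit Arguments.

Theorem mainTheorem1 (R : realType) (X : completeNormedModType R)
  (v : nat -> X) :
  uniformly_convex X ->
  (forall n m : nat, (0 < n)%N -> (0 < m)%N -> `|v (n + m)%N| <= `|v n + v m|) ->
  cvg ((fun n : nat => (n%:R)^-1 *: v n) @ \oo).
Proof.
move=> UC sa.
set u := fun n : nat => _.
have sa' : forall n m, (0 < n)%N -> (0 < m)%N -> `|v (n + m)%N| <= `|v n| + `|v m|.
  by move=> n m n0 m0; apply: (le_trans (sa n m n0 m0)); apply: ler_normD.
have [L [L0 [Hlo Hup]]] := @fekete R (fun n => `|v n|) (fun n => normr_ge0 (v n)) sa'.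
have key : forall e, 0 < e -> exists N, forall n m, (N <= n)%N -> (N <= m)%N ->
    `|u n - u m| < e.
  move=> e e0.
  rewrite le_eqVlt in L0; case/orP: L0 => [/eqP L0|Lpos].
    have e30 : 0 < e / 3 by rewrite divr_gt0.
    have [N HN] := Hup _ e30.
    exists (maxn N 1) => n m Nn Nm.
    have bnd : forall k, (maxn N 1 <= k)%N -> `|u k| <= e / 3.
      move=> k Nk; rewrite /u normu ler_pdivrMr ?ltr0n; last by lia.
      by have := HN k (ltac:(lia)) (ltac:(lia)); rewrite -L0 add0r.
    apply: (le_lt_trans (ler_normB _ _)).
    have := bnd n Nn; have := bnd m Nm; lra.
  pose eps := e / (4 * (L + 1)).
  have eps0 : 0 < eps by rewrite divr_gt0 // mulr_gt0 // addr_gt0.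
  have [N1 HN1] := dir_close UC sa Lpos Hlo Hup eps0.
  pose eta := Num.min 1 (e / 4).
  have eta0 : 0 < eta by rewrite lt_min ltr01 divr_gt0.
  have eta1 : eta <= 1 by rewrite ge_min lexx.
  have eta2 : eta <= e / 4 by rewrite ge_min lexx orbT.
  have [N2 HN2] := Hup _ eta0.
  exists (maxn (maxn N1 N2) 1) => n m Nn Nm.
  have bb : forall k, (maxn (maxn N1 N2) 1 <= k)%N ->
      [/\ 0 < `|v k|, L <= `|v k| / k%:R, `|v k| / k%:R <= L + eta &
          u k = (`|v k| / k%:R) *: (`|v k|^-1 *: v k)].
    move=> k Nk; have k0 : (0 < k)%N by lia.
    have k0' : 0 < k%:R :> R by rewrite ltr0n.
    have h1 := Hlo k k0.
    have h2 := HN2 k (ltac:(lia)) k0.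
    have ak : 0 < `|v k| by apply: lt_le_trans h1; rewrite mulr_gt0.
    split => //; first by rewrite ler_pdivlMr.
      by rewrite ler_pdivrMr.
    rewrite /u scalerA mulrC mulrA mulVf ?gt_eqF // mul1r //.
  have [an bn1 bn2 un] := bb n Nn.
  have [am bm1 bm2 um] := bb m Nm.
  have hd := HN1 n m (ltac:(lia)) (ltac:(lia)).
  set wn := `|v n|^-1 *: v n in un hd.
  set wm := `|v m|^-1 *: v m in um hd.
  set bn := `|v n| / n%:R in un bn1 bn2.
  set bm := `|v m| / m%:R in um bm1 bm2.
  have wn1 : `|wn| = 1 by apply: unit_norm.
  have -> : u n - u m = (bn - bm) *: wn + bm *: (wn - wm).
    by rewrite un um scalerBl scalerBr addrA subrK.
  apply: (le_lt_trans (ler_normD _ _)).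
  rewrite (normrZ (bn - bm) wn) (normrZ bm (wn - wm)) wn1 mulr1 (ger0_norm (_ : 0 <= bm)); last by lra.
  have h1 : `|bn - bm| <= eta by rewrite ler_norml; apply/andP; split; lra.
  have h2 : bm * `|wn - wm| <= (L + 1) * (eps + eps).
    by apply: ler_pM => //; lra.
  have h3 : (L + 1) * (eps + eps) = e / 2 by rewrite /eps; field; lra.
  lra.
apply: cauchy_cvg; apply: cauchy_exP => e e0.
have [N HN] := key e e0.
exists (u N); rewrite /fmapE -ball_normE /ball_.
by exists N => // n Nn; apply: HN.
Qed.
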